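(* Let $m>0$, $B_0\in\mathbb R$, and let $B_{[N]}\in\mathbb R^{N\times N}$ be the Jacobi matrix $$(B_{[N]}f)_n=-\xi_{n,n+1}f_{n+1}-\xi_{n-1,n}f_{n-1}+\Big(\eta_n+\tfrac{B_0^2}{2m}+\xi_{n,n+1}+\xi_{n-1,n}\Big)f_n,\quad n\in[N],$$ with $\eta_n>0$, $\xi_{n,n+1}>0$ and the convention $\xi_{0,1}=\xi_{N,N+1}=0$. Let $$A=\begin{pmatrix} i m^{-1}B_0 I_N & -m^{-1}I_N\\ B_{[N]} & -i m^{-1}B_0 I_N\end{pmatrix}\in\mathbb C^{2N\times 2N}.$$ Then to any eigenpair $(\lambda_j,v_j)$ of $B_{[N]}$ there correspond two eigenvalues of $A$, $$\mu_j^{\pm}=\pm\frac{i\sqrt{B_0^2+\lambda_j m}}{m},$$ with eigenvectors $$V_j^{\pm}=\frac{(v_j,u_j)^T}{|(v_j,u_j)^T|},\qquad u_j=i\Big(B_0\mp\sqrt{B_0^2+\lambda_j m}\Big)v_j.$$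
   Context: $A$ is the friction-free part (in a complex basis diagonalizing the magnetic coupling) of the drift matrix of a planar chain of $N$ charged harmonic oscillators of mass $m$ in a constant magnetic field $B_0$, with pinning parameters $\eta_n$ and nearest-neighbour couplings $\xi_{n,n+1}$. $[N]=\{1,\dots,N\}$. *)

(* Defs.v *)
From HB Require Import structures.
From mathcomp Require Import all_boot all_order all_algebra.
From mathcomp Require Import complex.
Set Implicit Arguments. Unset Strict Implicit. Unset Printing Implicit Defensive.
Import Order.TTheory GRing.Theory Num.Theory.
Local Open Scope ring_scope.
Local Open Scope complex_scope.

(* Indices are 0-based: row/column i : 'I_N corresponds to n = i+1 in the paper.
   eta n = eta_n (n = 1..N), xi n = xi_{n,n+1} (n = 0..N). *)
Definition jacobiB (R : rcfType) (N : nat) (m B0 : R) (eta xi : nat -> R) : 'M[R]_N :=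
  \matrix_(i < N, j < N)
    (if j == i :> nat then eta i.+1 + B0 ^+ 2 / (2 * m) + xi i.+1 + xi i
     else if j == i.+1 :> nat then - xi i.+1
     else if j.+1 == i :> nat then - xi i
     else 0).

Definition driftA (R : rcfType) (N : nat) (m B0 : R) (B : 'M[R]_N) : 'M[R[i]]_(N + N) :=
  block_mx ((('i * (m^-1 * B0)%:C) : R[i])%:M) ((- (m^-1)%:C : R[i])%:M)
           (map_mx (fun x : R => x%:C) B) ((- ('i * (m^-1 * B0)%:C) : R[i])%:M).

Definition cvnorm (R : rcfType) (n : nat) (V : 'cV[R[i]]_n) : R :=
  Num.sqrt (\sum_(k < n) ((complex.Re (V k 0)) ^+ 2 + (complex.Im (V k 0)) ^+ 2)).

(* Main.v *)
Require Import Defs.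
From HB Require Import structures.
From mathcomp Require Import all_boot all_order all_algebra.
From mathcomp Require Import complex ring lra zify.
Import Order.TTheory GRing.Theory Num.Theory.
Local Open Scope ring_scope.
Local Open Scope complex_scope.
Lemma sum_if1 (R : rcfType) (N n : nat) (x : R) :
  \sum_(j < N) (if (j : nat) == n then x else 0) = if (n < N)%N then x else 0.
Proof.
case: ltnP => h.
  rewrite (bigD1 (Ordinal h)) //= eqxx big1 ?addr0 // => j hj.
  rewrite ifF //; apply/negbTE; apply: contra hj => /eqP e; apply/eqP; exact: val_inj.
rewrite big1 // => j _; rewrite ifF //; apply/negbTE; have := ltn_ord j; lia.
Qed.
Lemma lam_pos (R : rcfType) (N : nat) (m B0 : R) (eta xi : nat -> R)
  (hm : 0 < m)
  (heta : forall n, (1 <= n <= N)%N -> 0 < eta n)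
  (hxi : forall n, (1 <= n < N)%N -> 0 < xi n)
  (hxi0 : xi 0%N = 0) (hxiN : xi N = 0)
  (lam : R) (v : 'cV[R]_N)
  (hv : v != 0) (hBv : jacobiB N m B0 eta xi *m v = lam *: v) : 0 < lam.
Proof.
have [k0 hk0] : exists k0, v k0 0 != 0.
  apply/existsP; apply: contraNT hv; rewrite negb_exists => /forallP h.
  apply/eqP/matrixP => i j; rewrite (ord1 j) mxE; exact/eqP/negbNE/h.
case: (@arg_maxP _ _ 'I_N k0 xpredT (fun k => `|v k 0|) isT) => k _ Hk.
set vk := v k 0.
have vk0 : vk != 0.
  by rewrite -normr_gt0; apply: lt_le_trans (Hk k0 isT); rewrite normr_gt0.
have xige0 : forall n, (n <= N)%N -> 0 <= xi n.
  move=> n hn; case: n hn => [|n] hn; first by rewrite hxi0.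
  case: (ltnP n.+1 N) => h; first by apply: ltW; apply: hxi; lia.
  have e : n.+1 = N by lia.
  by rewrite e hxiN.
set c := fun j => jacobiB N m B0 eta xi k j.
set e := eta k.+1 + B0 ^+ 2 / (2 * m).
have he : 0 < e.
  have h1 : 0 < eta k.+1 by apply: heta; have := ltn_ord k; lia.
  have h2 : 0 <= B0 ^+ 2 / (2 * m).
    by apply: divr_ge0; [apply: sqr_ge0 | apply: mulr_ge0 => //; apply: ltW].
  rewrite /e; lra.
have hrow : lam * vk = \sum_j c j * v j 0.
  by have := congr1 (fun M : 'M[R]_(N,1) => M k 0) hBv; rewrite !mxE => <-.
have hoff : forall j, j != k -> c j <= 0.
  move=> j hj; rewrite /c mxE ifF; last first.
    by apply/negbTE; apply: contra hj => /eqP e'; apply/eqP; exact: val_inj.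
  have := ltn_ord k; have := ltn_ord j => hj' hk'.
  case: eqP => [h1|h1]; first by rewrite oppr_le0; apply: xige0; lia.
  case: eqP => [h2|h2]; first by rewrite oppr_le0; apply: xige0; lia.
  by [].
have hsum : e <= \sum_j c j.
  have -> : \sum_j c j = \sum_(j < N) ((if (j : nat) == k then e + xi k.+1 + xi k else 0)
       + (if (j : nat) == k.+1 then - xi k.+1 else 0)
       + (if (j.+1 == k)%N then - xi k else 0)).
    apply: eq_bigr => j _; rewrite /c mxE.
    case: (eqVneq (j : nat) k) => [h1|h1].
      rewrite h1 ifF; last by apply/negbTE; lia.
      rewrite ifF; last by apply/negbTE; lia.
      by rewrite !addr0.
    case: (eqVneq (j : nat) k.+1) => [h2|h2].
      by rewrite ifF ?add0r ?addr0 //; apply/negbTE; lia.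
    by case: (eqVneq j.+1 k) => [h3|h3]; rewrite ?add0r ?addr0.
  rewrite !big_split /= sum_if1 sum_if1 ltn_ord.
  have -> : \sum_(j < N) (if (j.+1 == k)%N then - xi k else 0) = if (0 < k)%N then - xi k else 0.
    have := ltn_ord k; case: (k : nat) => [|k'] hk' /=.
      by rewrite big1 // => j _.
    by rewrite sum_if1 ifT //; lia.
  have := ltn_ord k => hk.
  case: ifP => h1; case: ifP => h2.
  - lra.
  - have -> : xi k = 0.
      have e' : (k : nat) = 0%N by lia.
      by rewrite e' hxi0.
    lra.
  - have -> : xi k.+1 = 0.
      have e' : k.+1 = N by lia.
      by rewrite e' hxiN.
    lra.
  - have e1 : (k : nat) = 0%N by lia.
    have e2 : k.+1 = N by lia.
    rewrite e2 hxiN e1 hxi0; lra.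
have key : \sum_j c j * vk ^+ 2 <= lam * vk ^+ 2.
  rewrite expr2 mulrA hrow mulr_suml; apply: ler_sum => j _.
  case: (eqVneq j k) => [->|hj]; first by rewrite mulrA.
  have h1 : v j 0 * vk <= vk * vk.
    apply: le_trans (ler_norm _) _.
    rewrite normrM; apply: le_trans (ler_wpM2r (normr_ge0 vk) (Hk j isT)) _.
    by rewrite -normrM ger0_norm // -expr2 sqr_ge0.
  have := hoff j hj; nra.
have vk2 : 0 < vk ^+ 2 by rewrite exprn_even_gt0.
rewrite -mulr_suml in key.
nra.
Qed.
Lemma ceq (R : rcfType) (x y : R[i]) : complex.Re x = complex.Re y -> complex.Im x = complex.Im y -> x = y.
Proof. by case: x; case: y => /= a b c d -> ->. Qed.

Lemma top (R : rcfType) (m B0 s : R) (hm : m != 0) :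
  'i * (m^-1 * B0)%:C + (- (m^-1)%:C) * ('i * (B0 - s)%:C) = 'i * (s / m)%:C :> R[i].
Proof. by apply: ceq => /=; field. Qed.

Lemma bot (R : rcfType) (m B0 s lam : R) (hm : m != 0) (hs : s ^+ 2 = B0 ^+ 2 + lam * m) :
  lam%:C + (- ('i * (m^-1 * B0)%:C)) * ('i * (B0 - s)%:C) = 'i * (s / m)%:C * ('i * (B0 - s)%:C) :> R[i].
Proof.
 have -> : lam = (s^+2 - B0^+2) / m by rewrite hs; field.
 by apply: ceq => /=; field. Qed.

Theorem main (R : rcfType) (N : nat) (m B0 : R) (eta xi : nat -> R)
  (hm : 0 < m) (lam : R) (v : 'cV[R]_N)
  (hv : v != 0) (hBv : jacobiB N m B0 eta xi *m v = lam *: v) (hlam : 0 < lam) :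
  forall sgn : bool,
    let s := (if sgn then 1 else -1) * Num.sqrt (B0 ^+ 2 + lam * m) in
    let mu : R[i] := 'i * (s / m)%:C in
    let u : 'cV[R[i]]_N := ('i * (B0 - s)%:C) *: map_mx (fun x : R => x%:C) v in
    let W : 'cV[R[i]]_(N + N) := col_mx (map_mx (fun x : R => x%:C) v) u in
    let V : 'cV[R[i]]_(N + N) := ((cvnorm W)^-1)%:C *: W in
    V != 0 /\ driftA m B0 (jacobiB N m B0 eta xi) *m V = mu *: V.
Proof.
move=> sgn s mu u W V.
have hm0 : m != 0 by rewrite gt_eqF.
have hs2 : s ^+ 2 = B0 ^+ 2 + lam * m.
  have h0 : 0 <= B0 ^+ 2 + lam * m by rewrite addr_ge0 ?sqr_ge0 // mulr_ge0 // ltW.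
  have hsg : (if sgn then 1 else -1) ^+ 2 = 1 :> R.
    by clear s mu u W V; case: sgn; rewrite ?sqrrN expr1n.
  by rewrite /s exprMn hsg mul1r sqr_sqrtr.
have [k0 hk0] : exists k0, v k0 0 != 0.
  apply/existsP; apply: contraNT hv; rewrite negb_exists => /forallP h.
  apply/eqP/matrixP => i j; rewrite (ord1 j) mxE; exact/eqP/negbNE/h.
set vc := map_mx (fun x : R => x%:C) v.
have hBc : map_mx (fun x : R => x%:C) (jacobiB N m B0 eta xi) *m vc = lam%:C *: vc.
  apply/matrixP => i j; rewrite !mxE.
  have := congr1 (fun M : 'M[R]_(N,1) => (M i j)%:C) hBv; rewrite !mxE /= => h.
  rewrite (eq_bigr (fun l => (jacobiB N m B0 eta xi i l * v l j)%:C)); last first.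
    by move=> l _; rewrite !mxE rmorphM.
  rewrite -rmorph_sum; apply: (etrans h); exact: rmorphM.
have hW : driftA m B0 (jacobiB N m B0 eta xi) *m W = mu *: W.
  rewrite /driftA /W /u mul_block_col !mul_scalar_mx hBc scale_col_mx.
  congr col_mx; rewrite !scalerA -scalerDl; congr (_ *: _).
    by rewrite top.
  by rewrite bot.
split; last first.
  by rewrite /V -scalemxAr hW !scalerA mulrC.
rewrite /V scaler_eq0 negb_or; apply/andP; split.
  suff hc : (cvnorm W)^-1 != 0.
    by apply: contra hc => /eqP [->].
  rewrite invr_eq0 /cvnorm gt_eqF // sqrtr_gt0.
  rewrite (bigD1 (lshift N k0)) //= col_mxEu mxE /=.
  have h1 : 0 < v k0 0 ^+ 2 by rewrite exprn_even_gt0.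
  have h2 : 0 <= \sum_(i < N + N | i != lshift N k0)
     ((complex.Re (W i 0)) ^+ 2 + (complex.Im (W i 0)) ^+ 2).
    by apply: sumr_ge0 => i _; rewrite addr_ge0 ?sqr_ge0.
  rewrite expr0n /= addr0; lra.
apply: contra hk0 => /eqP hW0.
have := congr1 (fun M : 'M[R[i]]_(N + N,1) => M (lshift N k0) 0) hW0.
rewrite /W col_mxEu !mxE => /= h.
by apply/eqP; case: h.
Qed.

Theorem proposition2p2 (R : rcfType) (N : nat) (m B0 : R) (eta xi : nat -> R)
  (hm : 0 < m)
  (heta : forall n, (1 <= n <= N)%N -> 0 < eta n)
  (hxi : forall n, (1 <= n < N)%N -> 0 < xi n)
  (hxi0 : xi 0%N = 0) (hxiN : xi N = 0)
  (lam : R) (v : 'cV[R]_N)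
  (hv : v != 0) (hBv : jacobiB N m B0 eta xi *m v = lam *: v) :
  forall sgn : bool,
    let s := (if sgn then 1 else -1) * Num.sqrt (B0 ^+ 2 + lam * m) in
    let mu : R[i] := 'i * (s / m)%:C in
    let u : 'cV[R[i]]_N := ('i * (B0 - s)%:C) *: map_mx (fun x : R => x%:C) v in
    let W : 'cV[R[i]]_(N + N) := col_mx (map_mx (fun x : R => x%:C) v) u in
    let V : 'cV[R[i]]_(N + N) := ((cvnorm W)^-1)%:C *: W in
    V != 0 /\ driftA m B0 (jacobiB N m B0 eta xi) *m V = mu *: V.
Proof.
have hl := @lam_pos R N m B0 eta xi hm heta hxi hxi0 hxiN lam v hv hBv.
exact: (@main R N m B0 eta xi hm lam v hv hBv hl).
Qed.
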